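(* Let $n\ge 3$ be an odd integer and $(\mathcal{C},\Sigma)$ an $n$-angulated category. Define a relation on objects of $\mathcal{C}$ by $A\sim B$ iff there exist objects $C_1,\dots,C_n$ and two $n$-angles $A\oplus C_1\xrightarrow{\alpha_1}C_2\xrightarrow{\alpha_2}\cdots\xrightarrow{\alpha_{n-1}}C_n\xrightarrow{\alpha_n}\Sigma A\oplus\Sigma C_1$ and $B\oplus C_1\xrightarrow{\beta_1}C_2\xrightarrow{\beta_2}\cdots\xrightarrow{\beta_{n-1}}C_n\xrightarrow{\beta_n}\Sigma B\oplus\Sigma C_1$ in $\mathcal{C}$. Then: (1) $\sim$ is an equivalence relation. (2) The set $\pi$ of equivalence classes $\{A\}$ is an abelian group under $\{A\}+\{B\}=\{A\oplus B\}$, and the inverse of $\{A\}$ is $\{\Sigma A\}$. (3) The assignment $\{A\}\leftrightarrow[A]$ gives an isomorphism of groups $\pi\cong K_0(\mathcal{C})$.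
   Context: All categories are small. Fix an integer $n\ge 3$. Let $\mathcal{C}$ be an additive category with an automorphism $\Sigma$. An $n$-$\Sigma$-sequence in $\mathcal{C}$ is a diagram $A_1\xrightarrow{\alpha_1}A_2\xrightarrow{\alpha_2}\cdots\xrightarrow{\alpha_{n-1}}A_n\xrightarrow{\alpha_n}\Sigma A_1$. Its left rotation is $A_2\xrightarrow{\alpha_2}\cdots\xrightarrow{\alpha_n}\Sigma A_1\xrightarrow{(-1)^n\Sigma\alpha_1}\Sigma A_2$. A morphism from $(A_\bullet,\alpha)$ to $(B_\bullet,\beta)$ is a tuple $(\varphi_1,\dots,\varphi_n)$, $\varphi_i:A_i\to B_i$, with $\beta_i\varphi_i=\varphi_{i+1}\alpha_i$ for $1\le i\le n-1$ and $\beta_n\varphi_n=(\Sigma\varphi_1)\alpha_n$; it is an isomorphism if all $\varphi_i$ are isomorphisms. Direct sums of sequences are taken termwise. $(\mathcal{C},\Sigma)$ is $n$-angulated if it is equipped with a collection $\mathscr N$ of $n$-$\Sigma$-sequences, called $n$-angles, such that: (N1)(a) $\mathscr N$ is closed under direct sums, direct summands and isomorphisms of $n$-$\Sigma$-sequences; (b) for every object $A$, the trivial sequence $A\xrightarrow{1}A\to0\to\cdots\to0\to\Sigma A$ is in $\mathscr N$; (c) every morphism $A_1\to A_2$ is the first morphism of some $n$-angle; (N2) an $n$-$\Sigma$-sequence is in $\mathscr N$ iff its left rotation is; (N3) given $n$-angles $(A_\bullet,\alpha),(B_\bullet,\beta)$ and $\varphi_1:A_1\to B_1$, $\varphi_2:A_2\to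 B_2$ with $\beta_1\varphi_1=\varphi_2\alpha_1$, there exist $\varphi_3,\dots,\varphi_n$ making $(\varphi_1,\dots,\varphi_n)$ a morphism; (N4) in (N3) the $\varphi_i$ can be chosen so that the mapping cone $A_2\oplus B_1\to A_3\oplus B_2\to\cdots\to\Sigma A_1\oplus B_n\to\Sigma A_2\oplus\Sigma B_1$, with maps $\left[\begin{smallmatrix}-\alpha_{i+1}&0\\ \varphi_{i+1}&\beta_i\end{smallmatrix}\right]$ ($1\le i\le n-1$) and last map $\left[\begin{smallmatrix}-\Sigma\alpha_1&0\\ \Sigma\varphi_1&\beta_n\end{smallmatrix}\right]$, is an $n$-angle. Grothendieck group: let $F(\mathcal{C})$ be the free abelian group on the isomorphism classes $\langle A\rangle$ of objects of $\mathcal{C}$. For an $n$-angle $A_\bullet$ put $\chi(A_\bullet)=\sum_{i=1}^n(-1)^{i+1}\langle A_i\rangle$. Let $R(\mathcal{C})$ be the subgroup generated by all $\chi(A_\bullet)$ ($A_\bullet$ an $n$-angle), together with $\langle 0\rangle$ when $n$ is even. Then $K_0(\mathcal{C})=F(\mathcal{C})/R(\mathcal{C})$, and $[A]$ denotes the class of $\langle A\rangle$. *)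

(* Defs.v *)
From HB Require Import structures.
From mathcomp Require Import all_boot all_algebra.
From mathcomp Require Import boolp.
Set Implicit Arguments. Unset Strict Implicit. Unset Printing Implicit Defensive.
Import GRing.Theory.

Record catData := CatData {
  Obj : Type;
  Hom : Obj -> Obj -> zmodType;
  idm : forall A, Hom A A;
  comp : forall A B D, Hom B D -> Hom A B -> Hom A D;
  zobj : Obj;
  bip : Obj -> Obj -> Obj;
  bin1 : forall A B, Hom A (bip A B);
  bin2 : forall A B, Hom B (bip A B);
  bpr1 : forall A B, Hom (bip A B) A;
  bpr2 : forall A B, Hom (bip A B) B }.

Arguments idm {c} A.
Arguments comp {c A B D}.
Arguments zobj {c}.
Arguments bip {c}.
Arguments bin1 {c} A B.
Arguments bin2 {c} A B.
Arguments bpr1 {c} A B.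
Arguments bpr2 {c} A B.

Definition additive_axioms (C : catData) : Prop :=
  [/\ (forall (A B D E : Obj C) (h : Hom D E) (g : Hom B D) (f : Hom A B),
          comp h (comp g f) = comp (comp h g) f),
      (forall (A B : Obj C) (f : Hom A B), comp (idm B) f = f /\ comp f (idm A) = f),
      (forall (A B D : Obj C) (g1 g2 : Hom B D) (f : Hom A B),
          comp (g1 + g2)%R f = (comp g1 f + comp g2 f)%R),
      (forall (A B D : Obj C) (g : Hom B D) (f1 f2 : Hom A B),
          comp g (f1 + f2)%R = (comp g f1 + comp g f2)%R)
    & (forall A : Obj C, (forall f : Hom zobj A, f = 0%R) /\ (forall f : Hom A zobj, f = 0%R))] /\
    (forall A B : Obj C,
         [/\ comp (bpr1 A B) (bin1 A B) = idm A, comp (bpr2 A B) (bin2 A B) = idm B,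
             comp (bpr1 A B) (bin2 A B) = 0%R, comp (bpr2 A B) (bin1 A B) = 0%R
           & (comp (bin1 A B) (bpr1 A B) + comp (bin2 A B) (bpr2 A B))%R = idm (bip A B)]).

Record addCat := AddCat { cdata :> catData; cax : additive_axioms cdata }.

Definition isIso (C : catData) (A B : Obj C) (f : Hom A B) : Prop :=
  exists g : Hom B A, comp g f = idm A /\ comp f g = idm B.

Definition iso (C : catData) (A B : Obj C) : Prop := exists f : Hom A B, isIso f.

Record autData (C : catData) := AutData {
  SO : Obj C -> Obj C;
  SH : forall A B : Obj C, Hom A B -> Hom (SO A) (SO B) }.
Arguments SO {C} _ _.
Arguments SH {C} _ {A B}.

Definition is_auto (C : catData) (S : autData C) : Prop :=
  [/\ (forall A : Obj C, SH S (idm A) = idm (SO S A)),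
      (forall (A B D : Obj C) (g : Hom B D) (f : Hom A B),
          SH S (comp g f) = comp (SH S g) (SH S f)),
      (forall (A B : Obj C) (f g : Hom A B), SH S (f + g)%R = (SH S f + SH S g)%R),
      bijective (SO S)
    & (forall A B : Obj C, bijective (@SH C S A B))].

Definition castH (C : catData) (A A' B B' : Obj C) (e1 : A = A') (e2 : B = B')
  (f : Hom A B) : Hom A' B' :=
  match e1 in _ = X, e2 in _ = Y return Hom X Y with erefl, erefl => f end.

Definition dif (b : bool) (T : Type) (f : b = true -> T) (g : T) : T :=
  (if b as b' return (b = b' -> T) then fun h => f h else fun _ => g) (erefl b).

Section Sequences.
Variables (C : catData) (S : autData C) (n : nat).

(* An n-Sigma-sequence A_1 -> A_2 -> ... -> A_n -> Sigma A_1, indexed from 0: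
   objects sob 0, ..., sob (n-1); maps smor i : sob i -> sob (i+1) for i+1 < n
   (the values for larger i are irrelevant); last map slast : sob (n-1) -> Sigma (sob 0). *)
Record nSeq := NSeq {
  sob : nat -> Obj C;
  smor : forall i, Hom (sob i) (sob i.+1);
  slast : Hom (sob n.-1) (SO S (sob 0)) }.

Definition is_smorph (X Y : nSeq) (f : forall i, Hom (sob X i) (sob Y i)) : Prop :=
  (forall i, i.+1 < n -> comp (smor Y i) (f i) = comp (f i.+1) (smor X i)) /\
  comp (slast Y) (f n.-1) = comp (SH S (f 0)) (slast X).

Definition seq_iso (X Y : nSeq) : Prop :=
  exists f : forall i, Hom (sob X i) (sob Y i),
    is_smorph f /\ forall i, i < n -> isIso (f i).

(* matrices of morphisms between biproducts: [[a, b], [c, d]] *)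
Definition mx2 (X1 X2 Y1 Y2 : Obj C) (a : Hom X1 Y1) (b : Hom X2 Y1)
  (c : Hom X1 Y2) (d : Hom X2 Y2) : Hom (bip X1 X2) (bip Y1 Y2) :=
  (comp (bin1 Y1 Y2) (comp a (bpr1 X1 X2)) + comp (bin1 Y1 Y2) (comp b (bpr2 X1 X2))
  + comp (bin2 Y1 Y2) (comp c (bpr1 X1 X2)) + comp (bin2 Y1 Y2) (comp d (bpr2 X1 X2)))%R.

Definition sumsig (A B : Obj C) : Hom (bip (SO S A) (SO S B)) (SO S (bip A B)) :=
  (comp (SH S (bin1 A B)) (bpr1 (SO S A) (SO S B))
  + comp (SH S (bin2 A B)) (bpr2 (SO S A) (SO S B)))%R.

Definition dsum (X Y : nSeq) : nSeq :=
  @NSeq (fun i => bip (sob X i) (sob Y i))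
        (fun i => mx2 (smor X i) 0%R 0%R (smor Y i))
        (comp (sumsig (sob X 0) (sob Y 0)) (mx2 (slast X) 0%R 0%R (slast Y))).

Definition tob (A : Obj C) (i : nat) : Obj C :=
  match i with 0 | 1 => A | _ => zobj end.
Definition tmor (A : Obj C) (i : nat) : Hom (tob A i) (tob A i.+1) :=
  match i return Hom (tob A i) (tob A i.+1) with 0 => idm A | _ => 0%R end.
Definition trivseq (A : Obj C) : nSeq := @NSeq (tob A) (tmor A) 0%R.

(* left rotation A_2 -> ... -> A_n -> Sigma A_1 -> Sigma A_2 *)
Definition rob (X : nSeq) (i : nat) : Obj C :=
  if i < n.-1 then sob X i.+1 else SO S (sob X (i - n.-1)).

Lemma rob_lt (X : nSeq) i : i < n.-1 -> sob X i.+1 = rob X i.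
Proof. by move=> h; rewrite /rob h. Qed.

Lemma rob_last (X : nSeq) : SO S (sob X 0) = rob X n.-1.
Proof. by rewrite /rob ltnn subnn. Qed.

Lemma rob_e1 (X : nSeq) i : i.+1 == n.-1 -> sob X n.-1 = rob X i.
Proof. by move/eqP=> h; rewrite /rob -h ltnSn. Qed.

Lemma rob_e2 (X : nSeq) i : i.+1 == n.-1 -> SO S (sob X 0) = rob X i.+1.
Proof. by move/eqP=> h; rewrite /rob -h ltnn subnn. Qed.

Definition rmor (X : nSeq) (i : nat) : Hom (rob X i) (rob X i.+1) :=
  dif (fun h : i.+1 < n.-1 => castH (rob_lt X (ltnW h)) (rob_lt X h) (smor X i.+1))
      (dif (fun h : i.+1 == n.-1 => castH (rob_e1 X h) (rob_e2 X h) (slast X)) 0%R).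

(* Sigma alpha_1 : Sigma A_1 -> Sigma A_2, viewed as a map rob (n-1) -> Sigma (rob 0) *)
Definition rfirst (X : nSeq) : Hom (rob X n.-1) (SO S (rob X 0)) :=
  dif (fun h : 0 < n.-1 =>
         castH (rob_last X) (congr1 (SO S) (rob_lt X h)) (SH S (smor X 0))) 0%R.

Definition rotate (X : nSeq) : nSeq :=
  @NSeq (rob X) (rmor X) (if odd n then (- rfirst X)%R else rfirst X).

(* mapping cone of a morphism f : X -> Y:
   A_2(+)B_1 -> A_3(+)B_2 -> ... -> Sigma A_1 (+) B_n -> Sigma A_2 (+) Sigma B_1 *)
Section Cone.
Variables (X Y : nSeq) (f : forall i, Hom (sob X i) (sob Y i)).

Definition cob (i : nat) : Obj C := bip (rob X i) (sob Y i).

Definition cpsi (i : nat) : Hom (rob X i) (sob Y i.+1) :=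
  dif (fun h : i < n.-1 => castH (rob_lt X h) erefl (f i.+1)) 0%R.

Definition cmor (i : nat) : Hom (cob i) (cob i.+1) :=
  mx2 (- rmor X i)%R 0%R (cpsi i) (smor Y i).

Definition clast : Hom (cob n.-1) (SO S (cob 0)) :=
  comp (sumsig (rob X 0) (sob Y 0))
       (mx2 (- rfirst X)%R 0%R (castH (rob_last X) erefl (SH S (f 0))) (slast Y)).

Definition cone : nSeq := @NSeq cob cmor clast.
End Cone.

Definition n_angulated (N : nSeq -> Prop) : Prop :=
  (forall X Y, N X -> N Y -> N (dsum X Y)) /\
  (forall X Y, N (dsum X Y) -> N X /\ N Y) /\
  (forall X Y, seq_iso X Y -> N X -> N Y) /\
  (forall A, N (trivseq A)) /\
  (forall (A B : Obj C) (g : Hom A B), exists X, N X /\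
      exists (e0 : sob X 0 = A) (e1 : sob X 1 = B), castH e0 e1 (smor X 0) = g) /\
  (forall X, N X <-> N (rotate X)) /\
  (forall X Y, N X -> N Y ->
     forall (f0 : Hom (sob X 0) (sob Y 0)) (f1 : Hom (sob X 1) (sob Y 1)),
     comp (smor Y 0) f0 = comp f1 (smor X 0) ->
     exists f : forall i, Hom (sob X i) (sob Y i), [/\ f 0 = f0, f 1 = f1 & is_smorph f]) /\
  (forall X Y, N X -> N Y ->
     forall (f0 : Hom (sob X 0) (sob Y 0)) (f1 : Hom (sob X 1) (sob Y 1)),
     comp (smor Y 0) f0 = comp f1 (smor X 0) ->
     exists f : forall i, Hom (sob X i) (sob Y i),
       [/\ f 0 = f0, f 1 = f1, is_smorph f & N (cone f)]).

(* An element of the free abelian group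
   F(C) on isomorphism classes is represented by a formal sum (list of
   (coefficient, object)); two formal sums are equal in F(C) iff they have the same
   coefficient on every isomorphism class (function fcoef). *)
Definition fsum := seq (int * Obj C).

Definition fcoef (s : fsum) (A : Obj C) : int :=
  \sum_(p <- s) (if `[< iso p.2 A >] then p.1 else 0)%R.

Definition chi (X : nSeq) : fsum := [seq (((-1) ^+ i)%R, sob X i) | i <- iota 0 n].

Definition inR (N : nSeq -> Prop) (s : fsum) : Prop :=
  exists (l : seq (int * {X : nSeq | N X})) (k : int),
    forall A : Obj C,
      fcoef s A = (\sum_(p <- l) p.1 * fcoef (chi (sval p.2)) A
                 + (if odd n then 0 else k * fcoef [:: (1%:Z, zobj)] A))%R.

Definition K0eq (N : nSeq -> Prop) (s t : fsum) : Prop :=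
  inR N (s ++ [seq ((- p.1)%R, p.2) | p <- t]).

Definition simrel (N : nSeq -> Prop) (A B : Obj C) : Prop :=
  exists (Cs : nat -> Obj C) (X Y : nSeq),
    [/\ N X, N Y, sob X 0 = bip A (Cs 0), sob Y 0 = bip B (Cs 0)
      & forall i, 0 < i < n -> sob X i = Cs i /\ sob Y i = Cs i].

End Sequences.

(* Main.v *)
From HB Require Import structures.
Require Import Defs.
From mathcomp Require Import all_boot all_algebra boolp zify.
Import GRing.Theory.
Set Implicit Arguments. Unset Strict Implicit. Unset Printing Implicit Defensive.
Local Open Scope ring_scope.
Notation Hm := Defs.Hom.
Notation cp := Defs.comp.
Notation bin1 := Defs.bin1.
Notation bin2 := Defs.bin2.
Notation bpr1 := Defs.bpr1.
Notation bpr2 := Defs.bpr2.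
Notation idm := Defs.idm.
Notation bip := Defs.bip.

Section Cat.
Variable C : addCat.
Implicit Types A B D E : Obj C.

Lemma compA A B D E (h : Hm D E) (g : Hm B D) (f : Hm A B) :
  cp h (cp g f) = cp (cp h g) f.
Proof. by case: (cax C) => [[]]. Qed.
Lemma comp1f A B (f : Hm A B) : cp (idm B) f = f.
Proof. by case: (cax C) => [[_ H]] _ _; case: (H _ _ f). Qed.
Lemma compf1 A B (f : Hm A B) : cp f (idm A) = f.
Proof. by case: (cax C) => [[_ H]] _ _; case: (H _ _ f). Qed.
Lemma compDl A B D (g1 g2 : Hm B D) (f : Hm A B) :
  cp (g1 + g2) f = cp g1 f + cp g2 f.
Proof. by case: (cax C) => [[]]. Qed.
Lemma compDr A B D (g : Hm B D) (f1 f2 : Hm A B) :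
  cp g (f1 + f2) = cp g f1 + cp g f2.
Proof. by case: (cax C) => [[]]. Qed.
Lemma to0 A (f : Hm A zobj) : f = 0.
Proof. by case: (cax C) => [[_ _ _ _ H]] _; case: (H A). Qed.
Lemma from0 A (f : Hm zobj A) : f = 0.
Proof. by case: (cax C) => [[_ _ _ _ H]] _; case: (H A). Qed.

Lemma xxx (V : zmodType) (x : V) : x = x + x -> x = 0.
Proof. by move=> h; apply/(addrI x); rewrite addr0 -h. Qed.

Lemma comp0l A B D (f : Hm A B) : cp (0 : Hm B D) f = 0.
Proof. by apply: xxx; rewrite -compDl addr0. Qed.
Lemma comp0r A B D (g : Hm B D) : cp g (0 : Hm A B) = 0.
Proof. by apply: xxx; rewrite -compDr addr0. Qed.
Lemma compNl A B D (g : Hm B D) (f : Hm A B) : cp (- g) f = - cp g f.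
Proof. by apply/eqP; rewrite -addr_eq0 -compDl addNr comp0l. Qed.
Lemma compNr A B D (g : Hm B D) (f : Hm A B) : cp g (- f) = - cp g f.
Proof. by apply/eqP; rewrite -addr_eq0 -compDr addNr comp0r. Qed.

Lemma p1i1 A B : cp (bpr1 A B) (bin1 A B) = idm A.
Proof. by case: (cax C) => _ H; case: (H A B). Qed.
Lemma p2i2 A B : cp (bpr2 A B) (bin2 A B) = idm B.
Proof. by case: (cax C) => _ H; case: (H A B). Qed.
Lemma p1i2 A B : cp (bpr1 A B) (bin2 A B) = 0.
Proof. by case: (cax C) => _ H; case: (H A B). Qed.
Lemma p2i1 A B : cp (bpr2 A B) (bin1 A B) = 0.
Proof. by case: (cax C) => _ H; case: (H A B). Qed.
Lemma ipsum A B : cp (bin1 A B) (bpr1 A B) + cp (bin2 A B) (bpr2 A B) = idm (bip A B).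
Proof. by case: (cax C) => _ H; case: (H A B). Qed.

Lemma p1i1x A B D (f : Hm D A) : cp (bpr1 A B) (cp (bin1 A B) f) = f.
Proof. by rewrite compA p1i1 comp1f. Qed.
Lemma p2i2x A B D (f : Hm D B) : cp (bpr2 A B) (cp (bin2 A B) f) = f.
Proof. by rewrite compA p2i2 comp1f. Qed.
Lemma p1i2x A B D (f : Hm D B) : cp (bpr1 A B) (cp (bin2 A B) f) = 0.
Proof. by rewrite compA p1i2 comp0l. Qed.
Lemma p2i1x A B D (f : Hm D A) : cp (bpr2 A B) (cp (bin1 A B) f) = 0.
Proof. by rewrite compA p2i1 comp0l. Qed.

Definition csimp := (comp0l, comp0r, compNl, compNr, comp1f, compf1,
  p1i1, p2i2, p1i2, p2i1, p1i1x, p2i2x, p1i2x, p2i1x, addr0, add0r, oppr0).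

Lemma bip_extr A B D (f g : Hm D (bip A B)) :
  cp (bpr1 A B) f = cp (bpr1 A B) g -> cp (bpr2 A B) f = cp (bpr2 A B) g -> f = g.
Proof.
move=> h1 h2; rewrite -(comp1f f) -(comp1f g) -ipsum !compDl -!compA h1 h2 //.
Qed.
Lemma bip_extl A B D (f g : Hm (bip A B) D) :
  cp f (bin1 A B) = cp g (bin1 A B) -> cp f (bin2 A B) = cp g (bin2 A B) -> f = g.
Proof.
move=> h1 h2; rewrite -(compf1 f) -(compf1 g) -ipsum !compDr !compA h1 h2 //.
Qed.

Section MX.
Variables (X1 X2 Y1 Y2 : Obj C).
Variables (a : Hm X1 Y1) (b : Hm X2 Y1) (c : Hm X1 Y2) (d : Hm X2 Y2).
Lemma pr1M : cp (bpr1 Y1 Y2) (mx2 a b c d) = cp a (bpr1 X1 X2) + cp b (bpr2 X1 X2).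
Proof. by rewrite /mx2 !compDr !csimp. Qed.
Lemma pr2M : cp (bpr2 Y1 Y2) (mx2 a b c d) = cp c (bpr1 X1 X2) + cp d (bpr2 X1 X2).
Proof. by rewrite /mx2 !compDr !csimp. Qed.
Lemma Mi1 : cp (mx2 a b c d) (bin1 X1 X2) = cp (bin1 Y1 Y2) a + cp (bin2 Y1 Y2) c.
Proof. by rewrite /mx2 !compDl -!compA !csimp. Qed.
Lemma Mi2 : cp (mx2 a b c d) (bin2 X1 X2) = cp (bin1 Y1 Y2) b + cp (bin2 Y1 Y2) d.
Proof. by rewrite /mx2 !compDl -!compA !csimp. Qed.
End MX.

Lemma mx2_comp (X1 X2 Y1 Y2 Z1 Z2 : Obj C)
  (a : Hm X1 Y1) (b : Hm X2 Y1) (c : Hm X1 Y2) (d : Hm X2 Y2)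
  (a' : Hm Y1 Z1) (b' : Hm Y2 Z1) (c' : Hm Y1 Z2) (d' : Hm Y2 Z2) :
  cp (mx2 a' b' c' d') (mx2 a b c d) =
  mx2 (cp a' a + cp b' c) (cp a' b + cp b' d) (cp c' a + cp d' c) (cp c' b + cp d' d).
Proof.
apply: bip_extr; apply: bip_extl;
rewrite !compA ?pr1M ?pr2M -!compA ?Mi1 ?Mi2 !compDl !compDr -!compA !csimp //.
Qed.

Lemma mx2_id A B : mx2 (idm A) 0 0 (idm B) = idm (bip A B).
Proof. by rewrite /mx2 !csimp ipsum. Qed.

Lemma iso_refl A : iso A A.
Proof. by exists (idm A), (idm A); rewrite comp1f. Qed.
Lemma iso_sym A B : iso A B -> iso B A.
Proof. by case=> f [g [h1 h2]]; exists g, f. Qed.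
Lemma iso_trans A B D : iso A B -> iso B D -> iso A D.
Proof.
case=> f [g [h1 h2]] [f' [g' [h1' h2']]]; exists (cp f' f), (cp g g'); split.
  by rewrite -compA (compA g') h1' comp1f.
by rewrite -compA (compA f) h2 comp1f.
Qed.
Lemma iso_eq A B : A = B -> iso A B.
Proof. by move=> ->; apply: iso_refl. Qed.

Lemma iso_bip A A' B B' : iso A A' -> iso B B' -> iso (bip A B) (bip A' B').
Proof.
case=> f [g [h1 h2]] [f' [g' [h1' h2']]].
exists (mx2 f 0 0 f'), (mx2 g 0 0 g'); split;
by rewrite mx2_comp !csimp ?h1 ?h2 ?h1' ?h2' mx2_id.
Qed.

Lemma iso_bipC A B : iso (bip A B) (bip B A).
Proof.
exists (mx2 0 (idm B) (idm A) 0), (mx2 0 (idm A) (idm B) 0); split;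
by rewrite mx2_comp !csimp mx2_id.
Qed.

Lemma iso_bipA A B D : iso (bip A (bip B D)) (bip (bip A B) D).
Proof.
exists (mx2 (bin1 A B) (cp (bin2 A B) (bpr1 B D)) 0 (bpr2 B D)).
exists (mx2 (bpr1 A B) 0 (cp (bin1 B D) (bpr2 A B)) (bin2 B D)).
by split; rewrite mx2_comp !csimp -?compA !csimp ipsum mx2_id.
Qed.

Lemma iso_bip0 A : iso (bip A zobj) A.
Proof.
exists (bpr1 A zobj), (bin1 A zobj); split; last by rewrite p1i1.
by rewrite -ipsum (to0 (bpr2 A zobj)) comp0r addr0.
Qed.

Lemma iso_0 A : idm A = 0 -> iso zobj A.
Proof.
move=> h; exists 0, 0; split; first by rewrite (from0 (cp _ _)) (from0 (idm _)).
by rewrite comp0l h.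
Qed.
End Cat.

Section Ang.
Variables (C : addCat) (S : autData C) (n : nat) (N : nSeq S n -> Prop).
Hypotheses (HS : is_auto S) (HN : n_angulated N) (Hn3 : (3 <= n)%N) (Hodd : odd n).
Implicit Types A B D E : Obj C.
Local Notation SO := (SO S).

Lemma SHcomp A B D (g : Hm B D) (f : Hm A B) : SH S (cp g f) = cp (SH S g) (SH S f).
Proof. by case: HS. Qed.
Lemma SHid A : SH S (idm A) = idm (SO A).
Proof. by case: HS. Qed.
Lemma SH0 A B : SH S (0 : Hm A B) = 0.
Proof. by case: HS => _ _ H _ _; apply: xxx; rewrite -H addr0. Qed.
Lemma SOsurj E : exists E', SO E' = E.
Proof. by case: HS => _ _ _ [g _ h] _; exists (g E). Qed.
Lemma iso_SO A B : iso A B -> iso (SO A) (SO B).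
Proof.
case=> f [g [h1 h2]]; exists (SH S f), (SH S g).
by rewrite -!SHcomp h1 h2 !SHid.
Qed.
Lemma iso_SO0 : iso zobj (SO zobj).
Proof. by apply: iso_0; rewrite -SHid (to0 (idm _)) SH0. Qed.

Lemma N_dsum X Y : N X -> N Y -> N (dsum X Y).
Proof. by have := HN; rewrite /n_angulated => -[H _]; apply: H. Qed.
Lemma N_iso X Y : seq_iso X Y -> N X -> N Y.
Proof. by have := HN; rewrite /n_angulated => -[_ [_ [H _]]]; apply: H. Qed.
Lemma N_triv A : N (trivseq S n A).
Proof. by have := HN; rewrite /n_angulated => -[_ [_ [_ [H _]]]]. Qed.
Lemma N_rot X : N X -> N (rotate X).
Proof. by have := HN; rewrite /n_angulated => -[_ [_ [_ [_ [_ [H _]]]]]] /H. Qed.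

Definition Ang (P : nat -> Obj C) :=
  exists X : nSeq S n, N X /\ forall i, (i < n)%N -> iso (sob X i) (P i).

Lemma AngE P : Ang P -> exists Y : nSeq S n, N Y /\ sob Y = P.
Proof.
case=> X [NX hi].
have H i : exists p : Hm (sob X i) (P i) * Hm (P i) (sob X i),
    (i < n)%N -> cp p.2 p.1 = idm _ /\ cp p.1 p.2 = idm _.
  case: (ltnP i n) => h; last by exists (0,0).
  by case: (hi i h) => f [g [h1 h2]]; exists (f, g).
pose ph i := (projT1 (cid (H i))).1.
pose ps i := (projT1 (cid (H i))).2.
have hps i : (i < n)%N -> cp (ps i) (ph i) = idm _ /\ cp (ph i) (ps i) = idm _.
  exact: (projT2 (cid (H i))).
pose Y := @NSeq _ S n P (fun i => cp (ph i.+1) (cp (smor X i) (ps i)))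
   (cp (SH S (ph 0%N)) (cp (slast X) (ps n.-1))).
exists Y; split => //.
apply: (N_iso (X:=X)) => //; exists ph; split; last first.
  by move=> i hi'; exists (ps i); apply: hps.
split.
  move=> i hi1; rewrite /Y /= -!compA (proj1 (hps i _)) ?compf1 //.
  exact: ltnW.
rewrite /Y /= -!compA (proj1 (hps _ _)) ?compf1 //.
by rewrite prednK // (leq_trans _ Hn3).
Qed.

Lemma Ang_iso P Q : Ang P -> (forall i, (i < n)%N -> iso (P i) (Q i)) -> Ang Q.
Proof.
case=> X [NX h] h'; exists X; split => // i hi; exact: iso_trans (h i hi) (h' i hi).
Qed.

Lemma Ang_dsum P Q : Ang P -> Ang Q -> Ang (fun i => bip (P i) (Q i)).
Proof.
case=> X [NX h] [Y [NY h']]; exists (dsum X Y); split; first exact: N_dsum.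
by move=> i hi; apply: iso_bip; [apply: h|apply: h'].
Qed.

Definition rotP (P : nat -> Obj C) i := if (i < n.-1)%N then P i.+1 else SO (P 0%N).

Lemma Ang_rot P : Ang P -> Ang (rotP P).
Proof.
case=> X [NX h]; exists (rotate X); split; first exact: N_rot.
move=> i hi; rewrite /= /rob /rotP; case: ifP => hi'.
  by apply: h; lia.
have -> : (i - n.-1 = 0)%N by lia.
by apply: iso_SO; apply: h; lia.
Qed.

Lemma Ang_triv A : Ang (tob A).
Proof. by exists (trivseq S n A); split; [apply: N_triv|move=> i _; apply: iso_refl]. Qed.


Lemma iso_bip0l A : iso (bip zobj A) A.
Proof. exact: iso_trans (iso_bipC _ _) (iso_bip0 _). Qed.

Lemma iso_bipIf (b1 b2 : bool) E : ~~ (b1 && b2) ->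
  iso (bip (if b1 then E else zobj) (if b2 then E else zobj)) (if b1 || b2 then E else zobj).
Proof.
case: b1; case: b2 => //= _; [exact: iso_bip0|exact: iso_bip0l|exact: iso_bip0].
Qed.

Definition zeroP (i : nat) : Obj C := zobj.
Lemma Ang_zero : Ang zeroP.
Proof. by apply: Ang_iso (Ang_triv zobj) _ => -[|[|i]] _; apply: iso_refl. Qed.

Definition pairP (q : nat) E i := if (i == q) || (i == q.+1) then E else zobj.
Definition wrapP E i := if i == 0%N then E else if i == n.-1 then SO E else zobj.

Lemma Ang_pair0 E : Ang (pairP 0 E).
Proof. by apply: Ang_iso (Ang_triv E) _ => -[|[|i]] _; apply: iso_refl. Qed.

Lemma Ang_wrap E : Ang (wrapP E).
Proof.
apply: Ang_iso (Ang_rot (Ang_pair0 E)) _ => i hi; rewrite /rotP /pairP /wrapP /=.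
case: ifP => h1.
  case: (eqVneq i 0%N) => [->|ne]; first exact: iso_refl.
  have -> : (i == n.-1) = false by lia.
  have -> : (i.+1 == 1)%N = false by lia.
  by apply: iso_refl.
have -> : (i == 0%N) = false by lia.
have -> : (i == n.-1) = true by lia.
  by apply: iso_refl.
Qed.

Lemma Ang_pairL E : Ang (pairP n.-2 (SO E)).
Proof.
apply: Ang_iso (Ang_rot (Ang_wrap E)) _ => i hi; rewrite /rotP /pairP /wrapP /=.
case: ifP => h1.
  have -> : ((i == n.-2) || (i == n.-2.+1)) = (i.+1 == n.-1) by lia.
  exact: iso_refl.
have -> : ((i == n.-2) || (i == n.-2.+1)) = true by lia.
  by apply: iso_refl.
Qed.

Lemma Ang_pair_down q E : (1 <= q)%N -> (q <= n.-2)%N -> Ang (pairP q E) -> Ang (pairP q.-1 E).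
Proof.
move=> h1 h2 hA; apply: Ang_iso (Ang_rot hA) _ => i hi; rewrite /rotP /pairP /=.
case: ifP => h3.
  have -> : ((i.+1 == q) || (i.+1 == q.+1)) = ((i == q.-1) || (i == q.-1.+1)) by lia.
  exact: iso_refl.
have -> : ((0 == q) || (0 == q.+1))%N = false by lia.
have -> : ((i == q.-1) || (i == q.-1.+1)) = false by lia.
by apply: iso_sym; apply: iso_SO0.
Qed.

Lemma Ang_pair q E : (q <= n.-2)%N -> Ang (pairP q E).
Proof.
case: q => [|q] hq; first exact: Ang_pair0.
have [E' <-] := SOsurj E.
have H k : (k <= (n - 3))%N -> Ang (pairP (n.-2 - k) (SO E')).
  elim: k => [|k IH] hk; first by rewrite subn0; apply: Ang_pairL.
  have -> : (n.-2 - k.+1 = (n.-2 - k).-1)%N by lia.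
  by apply: Ang_pair_down; [lia|lia|apply: IH; lia].
have := H (n.-2 - q.+1)%N; have -> : (n.-2 - (n.-2 - q.+1) = q.+1)%N by lia.
by apply; lia.
Qed.

Definition seg E a b i := if (a <= i < b)%N then E else zobj.

Lemma Ang_seg_k E a k : (a + k.*2 <= n)%N -> Ang (seg E a (a + k.*2)).
Proof.
elim: k => [|k IH] hk.
  apply: Ang_iso Ang_zero _ => i _; rewrite /seg addn0; have -> : (a <= i < a)%N = false by lia.
  exact: iso_refl.
apply: Ang_iso (Ang_dsum (IH _) (Ang_pair (q := (a + k.*2)%N) E _)) _; try lia.
move=> i _; rewrite /seg /pairP.
have -> : (a <= i < a + k.+1.*2)%N = (a <= i < a + k.*2)%N || ((i == a + k.*2) || (i == (a + k.*2).+1))%N by lia.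
by apply: iso_bipIf; lia.
Qed.

Lemma Ang_seg E a b : (a <= b <= n)%N -> ~~ odd (b - a) -> Ang (seg E a b).
Proof.
move=> hab ho; have := Ang_seg_k E (a := a) (k := (b - a)./2).
have -> : (a + (b - a)./2.*2 = b)%N.
  by rewrite -[in RHS](subnKC (_ : a <= b)%N) ?(even_halfK ho) //; lia.
by apply; lia.
Qed.

Definition ins A (Cs : nat -> Obj C) i := if i == 0%N then bip A (Cs 0%N) else Cs i.

Lemma sim_Ang A B Cs : Ang (ins A Cs) -> Ang (ins B Cs) -> simrel N A B.
Proof.
move=> /AngE [X [NX hX]] /AngE [Y [NY hY]].
exists Cs, X, Y; split => //; try by rewrite ?hX ?hY.
by move=> i hi; rewrite hX hY /ins; have -> : (i == 0%N) = false by lia.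
Qed.

Lemma L1 P Q A B E : Ang P -> Ang Q -> (forall i, (0 < i < n)%N -> iso (P i) (Q i)) ->
  iso (P 0%N) (bip A E) -> iso (Q 0%N) (bip B E) -> simrel N A B.
Proof.
move=> hP hQ hPQ h0 h0'.
apply: (@sim_Ang _ _ (fun i => if i == 0%N then E else P i)).
  apply: Ang_iso hP _ => -[|i] hi //=; exact: iso_refl.
apply: Ang_iso hQ _ => -[|i] hi //=; apply: iso_sym; apply: hPQ; lia.
Qed.

Lemma Ang_sim A B : simrel N A B -> exists Cs, Ang (ins A Cs) /\ Ang (ins B Cs).
Proof.
case=> Cs [X [Y [NX NY h0 h0' hi]]]; exists Cs; split.
  exists X; split => // -[|i] hi'; rewrite /ins /=; apply: iso_eq => //.
  by case: (hi i.+1 _) => //; lia.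
exists Y; split => // -[|i] hi'; rewrite /ins /=; apply: iso_eq => //.
by case: (hi i.+1 _) => //; lia.
Qed.

Lemma iso4 A B D E : iso (bip (bip A B) (bip D E)) (bip (bip A D) (bip B E)).
Proof.
apply: iso_trans (iso_sym (iso_bipA _ _ _)) _.
apply: iso_trans (iso_bipA _ _ _); apply: iso_bip; first exact: iso_refl.
apply: iso_trans (iso_bipA _ _ _) _; apply: iso_trans _ (iso_sym (iso_bipA _ _ _)).
by apply: iso_bip; [apply: iso_bipC|apply: iso_refl].
Qed.

Lemma sim_refl A : simrel N A A.
Proof.
apply: (L1 (P := tob A) (Q := tob A) (E := zobj)); try exact: Ang_triv.
- by move=> i _; apply: iso_refl.
- by apply: iso_sym; apply: iso_bip0.
- by apply: iso_sym; apply: iso_bip0.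
Qed.

Lemma sim_sym A B : simrel N A B -> simrel N B A.
Proof. by case=> Cs [X [Y [NX NY h0 h0' hi]]]; exists Cs, Y, X; split => // i /hi []. Qed.

Lemma sim_trans A B D : simrel N A B -> simrel N B D -> simrel N A D.
Proof.
move=> /Ang_sim [Cs [h1 h2]] /Ang_sim [Cs' [h3 h4]].
apply: (L1 (Ang_dsum h1 h3) (Ang_dsum h2 h4) (E := bip B (bip (Cs 0%N) (Cs' 0%N)))).
- move=> i hi; rewrite /ins; have -> : (i == 0%N) = false by lia.
  exact: iso_refl.
- rewrite /ins /=; apply: iso_trans (iso4 _ _ _ _) (iso_sym (iso_bipA _ _ _)).
- rewrite /ins /=; apply: iso_trans (iso4 _ _ _ _) _.
  apply: iso_trans _ (iso_sym (iso_bipA _ _ _)).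
  by apply: iso_bip; [apply: iso_bipC|apply: iso_refl].
Qed.

Lemma sim_bip A A' B B' : simrel N A A' -> simrel N B B' -> simrel N (bip A B) (bip A' B').
Proof.
move=> /Ang_sim [Cs [h1 h2]] /Ang_sim [Cs' [h3 h4]].
apply: (L1 (Ang_dsum h1 h3) (Ang_dsum h2 h4) (E := bip (Cs 0%N) (Cs' 0%N))).
- move=> i hi; rewrite /ins; have -> : (i == 0%N) = false by lia.
  exact: iso_refl.
- exact: iso4.
- exact: iso4.
Qed.

Lemma sim_iso A B : iso A B -> simrel N A B.
Proof.
move=> h; apply: (L1 (P := tob A) (Q := tob A) (E := zobj)); try exact: Ang_triv.
- by move=> i _; apply: iso_refl.
- by apply: iso_sym; apply: iso_bip0.
- exact: iso_trans (iso_sym (iso_bip0 A)) (iso_bip h (iso_refl _)).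
Qed.

Lemma sim_inv A : simrel N (bip A (SO A)) zobj.
Proof.
apply: (L1 (Ang_dsum (Ang_wrap A) (Ang_seg (SO A) (a := 0) (b := n.-1) _ _))
           (Ang_seg (SO A) (a := 1) (b := n) _ _) (E := zobj)); try lia.
- move=> i hi; rewrite /wrapP /seg.
  have -> : (i == 0%N) = false by lia.
  have -> : (1 <= i < n)%N = true by lia.
  case: (eqVneq i n.-1) => [->|ne].
    have -> : (0 <= n.-1 < n.-1)%N = false by lia.
  by apply: iso_bip0.
  have -> : (0 <= i < n.-1)%N = true by lia.
  by apply: iso_bip0l.
- rewrite /wrapP /seg /=; have -> : (0 < n.-1)%N = true by lia.
  by apply: iso_sym; apply: iso_bip0.
- rewrite /seg /=; apply: iso_sym; apply: iso_bip0.
Qed.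


Local Notation sim := (simrel N).

Lemma sim_SO A B : sim A B -> sim (SO A) (SO B).
Proof.
move=> h.
have h1 : sim (SO A) (bip (SO A) (bip B (SO B))).
  apply: sim_trans (sim_iso (iso_sym (iso_bip0 _))) _.
  by apply: sim_bip; [apply: sim_refl|apply: sim_sym; apply: sim_inv].
apply: sim_trans h1 _.
have h2 : sim (bip (SO A) (bip B (SO B))) (bip (bip (SO A) A) (SO B)).
  apply: sim_trans _ (sim_iso (iso_bipA _ _ _)).
  by apply: sim_bip; [apply: sim_refl|apply: sim_bip; [apply: sim_sym|apply: sim_refl]].
apply: sim_trans h2 _.
apply: sim_trans (sim_iso (iso_bip0l (SO B))).
apply: sim_bip; last exact: sim_refl.
by apply: sim_trans (sim_iso (iso_bipC _ _)) (sim_inv _).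
Qed.

Definition cls A := sim A.
Definition piT := {P : Obj C -> Prop | exists A, P = cls A}.
HB.instance Definition _ := gen_eqMixin piT.
HB.instance Definition _ := gen_choiceMixin piT.
Definition rep (q : piT) : Obj C := projT1 (cid (proj2_sig q)).
Definition cl A : piT := exist _ (cls A) (ex_intro _ A erefl).

Lemma piE (x y : piT) : proj1_sig x = proj1_sig y -> x = y.
Proof. by case: x => x hx; case: y => y hy /= e; subst; congr exist. Qed.

Lemma cl_rep q : cl (rep q) = q.
Proof. by apply: piE; rewrite /= /rep; case: (cid _) => A /= ->. Qed.

Lemma cl_eq A B : (cl A = cl B) <-> sim A B.
Proof.
split.
  move=> /(congr1 (@proj1_sig _ _)) /= e.
  have hB : cls B B := sim_refl B.
  by rewrite -e in hB.
move=> h; apply: piE => /=; apply: funext => X; apply: propext; split.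
  by move=> h'; apply: sim_trans (sim_sym h) h'.
by move=> h'; apply: sim_trans h h'.
Qed.

Lemma clP (P : piT -> Prop) : (forall A, P (cl A)) -> forall x, P x.
Proof. by move=> h x; rewrite -(cl_rep x). Qed.

Lemma rep_cl A : sim (rep (cl A)) A.
Proof. by apply/cl_eq; rewrite cl_rep. Qed.

Definition padd (x y : piT) := cl (bip (rep x) (rep y)).
Definition popp (x : piT) := cl (SO (rep x)).
Definition pzero := cl zobj.

Lemma paddE A B : padd (cl A) (cl B) = cl (bip A B).
Proof. by apply/cl_eq; apply: sim_bip; apply: rep_cl. Qed.
Lemma poppE A : popp (cl A) = cl (SO A).
Proof. by apply/cl_eq; apply: sim_SO; apply: rep_cl. Qed.

Lemma paddA : associative padd.
Proof.
move=> x y z; elim/clP: x => A; elim/clP: y => B; elim/clP: z => D.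
by rewrite !paddE; apply/cl_eq; apply: sim_iso; apply: iso_bipA.
Qed.
Lemma paddC : commutative padd.
Proof.
move=> x y; elim/clP: x => A; elim/clP: y => B.
by rewrite !paddE; apply/cl_eq; apply: sim_iso; apply: iso_bipC.
Qed.
Lemma padd0 : left_id pzero padd.
Proof.
move=> x; elim/clP: x => A.
by rewrite /pzero paddE; apply/cl_eq; apply: sim_iso; apply: iso_bip0l.
Qed.
Lemma paddN : left_inverse pzero popp padd.
Proof.
move=> x; elim/clP: x => A.
rewrite poppE paddE /pzero; apply/cl_eq.
by apply: sim_trans (sim_iso (iso_bipC _ _)) (sim_inv _).
Qed.

HB.instance Definition _ := GRing.isZmodule.Build piT paddA paddC padd0 paddN.

Lemma clD A B : cl (bip A B) = cl A + cl B.
Proof. by rewrite -paddE. Qed.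
Lemma cl0 : cl zobj = 0.
Proof. by []. Qed.
Lemma clN A : cl (SO A) = - cl A.
Proof. by rewrite -poppE. Qed.
Lemma cl_iso A B : iso A B -> cl A = cl B.
Proof. by move=> h; apply/cl_eq; apply: sim_iso. Qed.


Fixpoint bigb (f : nat -> Obj C) m := if m is m'.+1 then bip (bigb f m') (f m') else zobj.

Lemma cl_bigb f m : cl (bigb f m) = \sum_(0 <= j < m) cl (f j).
Proof.
elim: m => [|m IH]; first by rewrite big_geq.
by rewrite big_nat_recr //= clD IH.
Qed.

Lemma Ang_bigb (pat : nat -> nat -> Obj C) m :
  (forall j, (j < m)%N -> Ang (pat j)) -> Ang (fun i => bigb (fun j => pat j i) m).
Proof.
elim: m => [|m IH] h /=; first exact: Ang_zero.
by apply: (Ang_dsum (P := fun i => bigb (fun j => pat j i) m)); [apply: IH => j hj; apply: h; lia|apply: h].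
Qed.

Lemma bigb_iso f g m : (forall j, (j < m)%N -> iso (f j) (g j)) -> iso (bigb f m) (bigb g m).
Proof.
elim: m => [|m IH] h /=; first exact: iso_refl.
by apply: iso_bip; [apply: IH => j hj; apply: h; lia|apply: h].
Qed.

Lemma bigb_split f g m : iso (bigb (fun j => bip (f j) (g j)) m) (bip (bigb f m) (bigb g m)).
Proof.
elim: m => [|m IH] /=; first by apply: iso_sym; apply: iso_bip0.
by apply: iso_trans (iso4 _ _ _ _); apply: iso_bip => //; apply: iso_refl.
Qed.

Lemma bigb_zero f m : (forall j, (j < m)%N -> f j = zobj) -> iso (bigb f m) zobj.
Proof.
elim: m => [|m IH] h /=; first exact: iso_refl.
rewrite h //; apply: iso_trans (iso_bip0 _) _; apply: IH => j hj; apply: h; lia.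
Qed.

Lemma bigb_delta f i m : (i < m)%N ->
  iso (bigb (fun j => if j == i then f j else zobj) m) (f i).
Proof.
elim: m => [|m IH] hi //=.
case: (eqVneq m i) => [<-|ne].
  apply: iso_trans (iso_bip (bigb_zero _) (iso_refl _)) (iso_bip0l _) => j hj.
  by have -> : (j == m) = false by lia.
by apply: iso_trans (iso_bip (IH _) (iso_refl _)) (iso_bip0 _); lia.
Qed.

Lemma cl_if (b : bool) A : cl (if b then A else zobj) = if b then cl A else 0.
Proof. by case: b. Qed.

Lemma key P : Ang P -> \sum_(0 <= i < n) cl (P i) *~ ((-1) ^+ i) = 0.
Proof.
move=> hP.
pose segP j i := if (0 < j)%N && (odd j <= i < j)%N then P j else zobj.
pose segQ j i := if (0 < j)%N && (~~ odd j <= i < j.+1)%N then P j else zobj.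
have hAP : Ang (fun i => bip (P i) (bigb (fun j => segP j i) n)).
  apply: (Ang_dsum (Q := fun i => bigb (fun j => segP j i) n)) => //.
  apply: Ang_bigb => j hj; case: (posnP j) hj => [->|jp] hj.
    by apply: Ang_iso Ang_zero _ => i _; apply: iso_refl.
  apply: Ang_iso (Ang_seg (P j) (a := odd j) (b := j) _ _) _.
  - by move: hj jp; case: (odd j) => /=; lia.
  - by rewrite oddB ?oddb ?addbb //; case: (odd j) jp.
  - by move=> i _; rewrite /segP /seg jp; apply: iso_refl.
have hAQ : Ang (fun i => bigb (fun j => segQ j i) n).
  apply: Ang_bigb => j hj; case: (posnP j) hj => [->|jp] hj.
    by apply: Ang_iso Ang_zero _ => i _; apply: iso_refl.
  apply: Ang_iso (Ang_seg (P j) (a := ~~ odd j) (b := j.+1) _ _) _.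
  - by move: hj jp; case: (odd j) => /=; lia.
  - by rewrite oddB ?oddb /= ?addbb //; case: (odd j).
  - by move=> i _; rewrite /segQ /seg jp; apply: iso_refl.
have H := L1 hAP hAQ (A := bip (P 0%N) (bigb (fun j => segP j 0%N) n))
   (B := bigb (fun j => segQ j 0%N) n) (E := zobj).
have {H} /cl_eq H : simrel N (bip (P 0%N) (bigb (fun j => segP j 0%N) n)) (bigb (fun j => segQ j 0%N) n).
  apply: H; try by apply: iso_sym; apply: iso_bip0.
  move=> i hi.
  have hin : (i < n)%N by lia.
  apply: iso_trans (iso_bip (iso_sym (bigb_delta P hin)) (iso_refl _)) _.
  apply: iso_trans (iso_sym (bigb_split _ _ _)) _.
  apply: bigb_iso => j hj; rewrite /segQ /segP.
  have -> : ((0 < j) && (~~ odd j <= i < j.+1))%N = (j == i) || ((0 < j) && (odd j <= i < j))%N.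
    by case: (odd j) => /=; lia.
  by apply: iso_bipIf; case: (odd j) => /=; lia.
rewrite clD !cl_bigb in H.
have n0 : (0 < n)%N by lia.
rewrite big_ltn // expr0 mulr1z.
have E1 : \sum_(1 <= i < n) cl (P i) *~ ((-1) ^+ i) =
  \sum_(0 <= j < n) cl (segP j 0%N) - \sum_(0 <= j < n) cl (segQ j 0%N).
  have bl (F : nat -> piT) : \sum_(0 <= j < n) F j = F 0%N + \sum_(1 <= j < n) F j by rewrite big_ltn.
  rewrite !bl /segP /segQ /= !cl0 !add0r -sumrB.
  apply: eq_big_nat => i hi; rewrite !cl_if.
  have -> : (0 < i)%N = true by lia.
  case: (boolP (odd i)) => ho /=.
    by rewrite -signr_odd ho expr1 mulrN1z sub0r.
  by rewrite -signr_odd (negbTE ho) expr0 mulr1z subr0 /=.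
by rewrite E1 addrA H subrr.
Qed.


Section Free.
Variables (G : zmodType) (g : Obj C -> G).
Hypothesis giso : forall A B, iso A B -> g A = g B.

Definition Phi (s : fsum C) := \sum_(p <- s) g p.2 *~ p.1.

Lemma Phi0 s : (forall D, fcoef s D = 0) -> Phi s = 0.
Proof.
have [k] := ubnP (size s); elim: k s => // k IH [|[c A] s] /= hk hs.
  by rewrite /Phi big_nil.
set t := (c, A) :: s.
rewrite /Phi (bigID (fun p : int * Obj C => `[< iso p.2 A >])) /=.
have -> : \sum_(p <- t | `[< iso p.2 A >]) g p.2 *~ p.1 = 0.
  rewrite (eq_bigr (fun p => g A *~ p.1)); last by move=> p /asboolP /giso ->.
  rewrite -mulrz_sumr big_mkcond /=.
  by have := hs A; rewrite /fcoef => ->; rewrite mulr0z.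
rewrite add0r big_cons /=.
have -> : `[< iso A A >] = true by apply/asboolP; apply: iso_refl.
rewrite /= -big_filter; apply: IH; first by rewrite size_filter (leq_ltn_trans (count_size _ _)).
move=> D; rewrite /fcoef big_filter.
case: (asboolP (iso A D)) => hAD.
  rewrite big1 // => p /asboolP hp; case: asboolP => // hpD.
  by case: hp; apply: iso_trans hpD (iso_sym hAD).
have := hs D; rewrite /fcoef (bigID (fun p : int * Obj C => `[< iso p.2 A >])) /=.
rewrite big1 ?add0r.
  rewrite big_cons /=; have -> : `[< iso A A >] = true by apply/asboolP; apply: iso_refl.
  by [].
move=> p /asboolP hp; case: asboolP => // hpD.
by case: hAD; apply: iso_trans (iso_sym hp) hpD.
Qed.

Lemma fcoef_cat (s t : fsum C) D : fcoef (s ++ t) D = fcoef s D + fcoef t D.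
Proof. by rewrite /fcoef big_cat. Qed.
Lemma fcoef_neg (s : fsum C) D : fcoef [seq (- p.1, p.2) | p <- s] D = - fcoef s D.
Proof.
rewrite /fcoef big_map -sumrN; apply: eq_bigr => p _ /=; case: ifP => //; by rewrite oppr0.
Qed.
Lemma Phi_cat s t : Phi (s ++ t) = Phi s + Phi t.
Proof. by rewrite /Phi big_cat. Qed.
Lemma Phi_neg (s : fsum C) : Phi [seq (- p.1, p.2) | p <- s] = - Phi s.
Proof. by rewrite /Phi big_map -sumrN; apply: eq_bigr => p _ /=; rewrite mulrNz. Qed.

Lemma Phi_eq s t : (forall D, fcoef s D = fcoef t D) -> Phi s = Phi t.
Proof.
move=> h; apply/eqP; rewrite -subr_eq0 -Phi_neg -Phi_cat; apply/eqP/Phi0 => D.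
by rewrite fcoef_cat fcoef_neg h subrr.
Qed.
End Free.


Definition dl A D : int := if `[< iso A D >] then 1 else 0.
Lemma ifdl A D (c : int) : (if `[< iso A D >] then c else 0) = dl A D * c.
Proof. by rewrite /dl; case: asboolP => _; rewrite ?mul1r ?mul0r. Qed.

Definition Rset (phi : Obj C -> int) := exists (l : seq (int * {X : nSeq S n | N X})),
  forall A, phi A = \sum_(p <- l) p.1 * fcoef (chi (sval p.2)) A.

Lemma inR_Rset s : inR N s <-> Rset (fcoef s).
Proof.
rewrite /inR /Rset Hodd; split => [[l [k h]]|[l h]]; exists l; last exists 0.
  by move=> A; rewrite h addr0.
by move=> A; rewrite h addr0.
Qed.

Lemma Rset_ext phi psi : (forall D, phi D = psi D) -> Rset phi -> Rset psi.
Proof. by move=> e [l h]; exists l => D; rewrite -e h. Qed.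
Lemma Rset_ext' phi psi : Rset phi -> (forall D, phi D = psi D) -> Rset psi.
Proof. by move=> h e; apply: Rset_ext h. Qed.
Lemma RsetD phi psi : Rset phi -> Rset psi -> Rset (fun D => phi D + psi D).
Proof. by move=> [l h] [l' h']; exists (l ++ l') => D; rewrite big_cat h h'. Qed.
Lemma RsetZ (c : int) phi : Rset phi -> Rset (fun D => c * phi D).
Proof.
move=> [l h]; exists [seq (c * p.1, p.2) | p <- l] => D.
by rewrite big_map h mulr_sumr; apply: eq_bigr => p _ /=; rewrite mulrA.
Qed.
Lemma RsetN phi : Rset phi -> Rset (fun D => - phi D).
Proof. by move/(RsetZ (-1)); apply: Rset_ext => D; rewrite mulN1r. Qed.

Definition chiP (P : nat -> Obj C) D := \sum_(0 <= i < n) dl (P i) D * (-1) ^+ i.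

Lemma fcoef_chi (X : nSeq S n) D : fcoef (chi X) D = chiP (sob X) D.
Proof.
rewrite /fcoef /chi /chiP big_map /index_iota subn0; apply: eq_bigr => i _ /=.
by rewrite ifdl.
Qed.

Lemma Rset_Ang P : Ang P -> Rset (chiP P).
Proof.
move=> /AngE [Y [NY hY]]; exists [:: (1, exist _ Y NY)] => D.
by rewrite big_seq1 /= mul1r fcoef_chi hY.
Qed.

Lemma sum_sign m : \sum_(0 <= i < m) ((-1) ^+ i : int) = (odd m)%:R.
Proof.
elim: m => [|m IH]; first by rewrite big_geq.
rewrite big_nat_recr //= IH -signr_odd; by case: (odd m); rewrite ?expr1 ?expr0 ?subrr ?add0r.
Qed.

Lemma split3 (F : nat -> int) : \sum_(0 <= i < n) F i = F 0%N + F 1%N + F 2%N + \sum_(3 <= i < n) F i.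
Proof. by rewrite big_ltn; last lia; rewrite big_ltn; last lia; rewrite big_ltn; last lia; rewrite !addrA. Qed.

Lemma split1 (F : nat -> int) : \sum_(0 <= i < n) F i = F 0%N + \sum_(1 <= i < n) F i.
Proof. by rewrite big_ltn; last lia. Qed.

Lemma splitL (F : nat -> int) : \sum_(1 <= i < n) F i = \sum_(1 <= i < n.-1) F i + F n.-1.
Proof. by rewrite -{1}(@prednK n); [rewrite big_nat_recr //; lia|lia]. Qed.

Lemma tail3 : \sum_(3 <= i < n) ((-1) ^+ i : int) = 0.
Proof.
have := sum_sign n; rewrite split3 Hodd /= expr0 expr1 expr2 mulrN1 opprK; lia.
Qed.

Lemma mid1 : \sum_(1 <= i < n.-1) ((-1) ^+ i : int) = -1.
Proof.
have := sum_sign n.-1; rewrite (big_ltn (_ : 0 < n.-1)%N); last lia.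
have -> : odd n.-1 = false by apply/negbTE; rewrite -oddS prednK ?Hodd //; lia.
rewrite expr0 /=; lia.
Qed.

Lemma R1 : Rset (dl zobj).
Proof.
apply: Rset_ext (Rset_Ang Ang_zero) => D.
by rewrite /chiP /zeroP -mulr_sumr sum_sign Hodd mulr1.
Qed.

Definition spl A B i := if i == 0%N then A else if i == 1%N then bip A B
  else if i == 2%N then B else zobj.

Lemma R2 A B : Rset (fun D => dl (bip A B) D - dl A D - dl B D).
Proof.
have hA : Ang (spl A B).
  apply: Ang_iso (Ang_dsum (Ang_triv A) (Ang_pair (q := 1) B _)) _; first lia.
  move=> [|[|[|i]]] _ /=; rewrite /pairP /spl /=.
  - exact: iso_bip0.
  - exact: iso_refl.
  - exact: iso_bip0l.
  - exact: iso_bip0.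
apply: Rset_ext (RsetN (Rset_Ang hA)) => D.
rewrite /chiP split3 /spl /=.
rewrite (eq_big_nat _ _ (F2 := fun i => dl zobj D * (-1) ^+ i)); last first.
  move=> i hi; have -> : (i == 0%N) = false by lia.
  have -> : (i == 1%N) = false by lia.
  have -> : (i == 2%N) = false by lia.
  done.
rewrite -mulr_sumr tail3 mulr0 addr0 expr0 expr1 expr2; lia.
Qed.

Lemma R3 A : Rset (fun D => dl A D + dl (SO A) D).
Proof.
apply: Rset_ext (RsetD (Rset_Ang (Ang_wrap A)) R1) => D.
rewrite /chiP split1 splitL /wrapP /=.
rewrite (eq_big_nat _ _ (F2 := fun i => dl zobj D * (-1) ^+ i)); last first.
  move=> i hi; have -> : (i == 0%N) = false by lia.
  have -> : (i == n.-1) = false by lia.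
  done.
have -> : (n.-1 == 0%N) = false by lia.
rewrite eqxx -mulr_sumr mid1 expr0 mulr1 -signr_odd.
have -> : odd n.-1 = false by apply/negbTE; rewrite -oddS prednK ?Hodd //; lia.
rewrite expr0; lia.
Qed.


Lemma sim_R A B : simrel N A B -> Rset (fun D => dl A D - dl B D).
Proof.
move=> /Ang_sim [Cs [h1 h2]].
have e D : chiP (ins A Cs) D - chiP (ins B Cs) D = dl (bip A (Cs 0%N)) D - dl (bip B (Cs 0%N)) D.
  rewrite /chiP !split1.
  rewrite (eq_big_nat _ _ (F1 := fun i => dl (ins A Cs i) D * _) (F2 := fun i => dl (ins B Cs i) D * (-1) ^+ i)).
    by rewrite /ins /= expr0 !mulr1 opprD addrACA subrr addr0.
  by move=> i hi; rewrite /ins; have -> : (i == 0%N) = false by lia.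
have := RsetD (RsetD (Rset_Ang h1) (RsetN (Rset_Ang h2)))
   (RsetD (RsetN (R2 A (Cs 0%N))) (R2 B (Cs 0%N))).
apply: Rset_ext => D /=; have := e D; lia.
Qed.

Lemma fcoef_scale (c : int) (s : fsum C) D : fcoef [seq (c * q.1, q.2) | q <- s] D = c * fcoef s D.
Proof.
rewrite /fcoef big_map mulr_sumr; apply: eq_bigr => q _ /=; case: ifP => //; by rewrite mulr0.
Qed.

Lemma R_sim A B : inR N [:: (1%:Z, A); (- (1%:Z), B)] -> simrel N A B.
Proof.
move=> /inR_Rset [l hl].
pose tf (l : seq (int * {X : nSeq S n | N X})) :=
  flatten [seq [seq (p.1 * q.1, q.2) | q <- chi (sval p.2)] | p <- l].
have ft l' D : fcoef (tf l') D = \sum_(p <- l') p.1 * fcoef (chi (sval p.2)) D.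
  rewrite /tf; elim: l' => [|p l' IH] /=; first by rewrite /fcoef !big_nil.
  by rewrite fcoef_cat IH fcoef_scale big_cons.
have pt l' : Phi cl (tf l') = 0.
  rewrite /tf; elim: l' => [|p l' IH] /=; first by rewrite /Phi big_nil.
  rewrite Phi_cat IH addr0 /Phi big_map.
  rewrite (eq_bigr (fun q => (cl q.2 *~ q.1) *~ p.1)); last by move=> q _; rewrite mulrC mulrzA.
  rewrite -mulrz_suml.
  have -> : \sum_(q <- chi (sval p.2)) cl q.2 *~ q.1 = 0.
    rewrite /chi big_map /index_iota.
    have := key (P := sob (sval p.2)); rewrite /index_iota subn0 => -> //.
    by exists (sval p.2); split; [apply: (svalP p.2)|move=> i _; apply: iso_refl].
  by rewrite mul0rz.
have := Phi_eq cl_iso (s := [:: (1%:Z, A); (- (1%:Z), B)]) (t := tf l).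
rewrite pt.
rewrite /Phi !big_cons big_nil /= mulr1z mulrN1z addr0 => h.
apply/cl_eq; apply/eqP; rewrite -subr_eq0; apply/eqP; apply: h => D.
by rewrite hl ft.
Qed.

Lemma Rmul (k : nat) X : exists Y, Rset (fun D => k%:Z * dl X D - dl Y D).
Proof.
elim: k => [|k [Y hY]].
  by exists zobj; apply: Rset_ext (RsetN R1) => D; rewrite mul0r add0r.
exists (bip Y X); apply: Rset_ext (RsetD hY (RsetN (R2 Y X))) => D; lia.
Qed.

Lemma Rmulz (c : int) X : exists Y, Rset (fun D => c * dl X D - dl Y D).
Proof.
case: c => k; first exact: Rmul.
have [Y hY] := Rmul k.+1 (SO X); exists Y.
apply: Rset_ext (RsetD hY (RsetN (RsetZ (k.+1)%:Z (R3 X)))) => D.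
rewrite NegzE; lia.
Qed.

Lemma R_surj (s : fsum C) : exists A, Rset (fun D => fcoef s D - dl A D).
Proof.
elim: s => [|[c X] s [A hA]].
  by exists zobj; apply: Rset_ext (RsetN R1) => D; rewrite /fcoef big_nil add0r.
have [Y hY] := Rmulz c X.
exists (bip Y A); apply: Rset_ext (RsetD (RsetD hY hA) (RsetN (R2 Y A))) => D.
rewrite /fcoef big_cons /= ifdl -/(fcoef s D); lia.
Qed.

Lemma main_sec :
  [/\ (forall A : Obj C, simrel N A A),
      (forall A B : Obj C, simrel N A B -> simrel N B A)
    & (forall A B D : Obj C, simrel N A B -> simrel N B D -> simrel N A D)] /\
  [/\ (forall A A' B B' : Obj C, simrel N A A' -> simrel N B B' ->
          simrel N (bip A B) (bip A' B')),
      (forall A B D : Obj C, simrel N (bip A (bip B D)) (bip (bip A B) D)),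
      (forall A B : Obj C, simrel N (bip A B) (bip B A)),
      (forall A : Obj C, simrel N (bip A zobj) A)
    & (forall A : Obj C, simrel N (bip A (SO A)) zobj)] /\
  [/\ (forall A B : Obj C, simrel N A B <-> K0eq N [:: (1%:Z, A)] [:: (1%:Z, B)]),
      (forall A B : Obj C,
          K0eq N [:: (1%:Z, bip A B)] [:: (1%:Z, A); (1%:Z, B)])
    & (forall s : fsum C, exists A : Obj C, K0eq N s [:: (1%:Z, A)])].
Proof.
split; last split.
- split; [exact: sim_refl | exact: sim_sym | exact: sim_trans].
- split.
  + exact: sim_bip.
  + by move=> A B D; apply: sim_iso; apply: iso_bipA.
  + by move=> A B; apply: sim_iso; apply: iso_bipC.
  + by move=> A; apply: sim_iso; apply: iso_bip0.
  + exact: sim_inv.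
- split.
  + move=> A B; split; first last.
      by rewrite /K0eq /=; apply: R_sim.
    move=> h; rewrite /K0eq /= inR_Rset; apply: (Rset_ext' (sim_R h)) => D.
    by rewrite /fcoef !big_cons big_nil /= !ifdl; lia.
  + move=> A B; rewrite /K0eq /= inR_Rset; apply: (Rset_ext' (R2 A B)) => D.
    by rewrite /fcoef !big_cons big_nil /= !ifdl; lia.
  + move=> s; have [A hA] := R_surj s; exists A; rewrite /K0eq /= inR_Rset.
    apply: (Rset_ext' hA) => D; rewrite fcoef_cat /fcoef big_cons big_nil /= ifdl; lia.
Qed.

End Ang.

Theorem proposition2p3 (C : addCat) (S : autData C) (n : nat)
  (N : nSeq S n -> Prop) :
  is_auto S -> n_angulated N -> (3 <= n)%N -> odd n ->
  [/\ (forall A : Obj C, simrel N A A),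
      (forall A B : Obj C, simrel N A B -> simrel N B A)
    & (forall A B D : Obj C, simrel N A B -> simrel N B D -> simrel N A D)] /\
  [/\ (forall A A' B B' : Obj C, simrel N A A' -> simrel N B B' ->
          simrel N (bip A B) (bip A' B')),
      (forall A B D : Obj C, simrel N (bip A (bip B D)) (bip (bip A B) D)),
      (forall A B : Obj C, simrel N (bip A B) (bip B A)),
      (forall A : Obj C, simrel N (bip A zobj) A)
    & (forall A : Obj C, simrel N (bip A (SO S A)) zobj)] /\
  [/\ (forall A B : Obj C, simrel N A B <-> K0eq N [:: (1%:Z, A)] [:: (1%:Z, B)]),
      (forall A B : Obj C,
          K0eq N [:: (1%:Z, bip A B)] [:: (1%:Z, A); (1%:Z, B)])
    & (forall s : fsum C, exists A : Obj C, K0eq N s [:: (1%:Z, A)])].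
Proof. by move=> HS HN Hn3 Hodd; apply: main_sec. Qed.
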